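(* Let $E$ be a finite set of events with timestamps $\tau(e)\in\mathbb{R}$, let $t_w>0$ be real and $n\ge1$ an integer, and let $\mathcal{I}$ be the family of all $T\subseteq E$ with $|\{e\in T:\tau(e)\in[t,t+t_w)\}|\le n$ for every $t\in\mathbb{R}$. Let $Y\subseteq E$ and let $J_{\min}$, $J_{\max}$ be bases of $Y$ of minimum and maximum cardinality, respectively. For $e\in E$ let $\mathrm{ball}(e)=(\tau(e)-t_w,\tau(e)+t_w)$. Define the DeletionStep, taking a pair $(J_{\min},J_{\max})$ with $J_{\min}\neq\emptyset$ to a pair $(J'_{\min},J'_{\max})$: let $b$ be an element of $J_{\min}$ with minimum timestamp and set $J'_{\min}=J_{\min}\setminus\{b\}$; list the elements of $\{a\in J_{\max}:\tau(a)\in\mathrm{ball}(b)\}$ in increasing order of timestamp and let $J'_{\max}$ be $J_{\max}$ with the first two of these removed (or with all of them removed if there are fewer than two). Then the invariant ''for every $a\in J_{\max}$ there exists $c\in J_{\min}$ with $\tau(c)\in\mathrm{ball}(a)$'' holds for the initial pair $(J_{\min},J_{\max})$, and it also holds (with $J_{\min},J_{\max}$ replaced by the current sets) for the pair obtained after any number of successive iterations of DeletionStep starting from $(J_{\min},J_{\max})$.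
   Context: A base of $Y$ is an inclusion-maximal subset $J\subseteq Y$ with $J\in\mathcal{I}$. *)

(* Defs.v *)
From HB Require Import structures.
From mathcomp Require Import all_boot all_order all_algebra.
From mathcomp Require Import reals.
Set Implicit Arguments. Unset Strict Implicit. Unset Printing Implicit Defensive.
Import Order.TTheory GRing.Theory Num.Theory.
Local Open Scope ring_scope.

Section Defs.
Variables (R : realType) (T : finType) (tau : T -> R) (tw : R) (n : nat).

Definition indep (S : {set T}) : Prop :=
  forall t : R, (#|[set e in S | ((t <= tau e)%R && (tau e < t + tw)%R)]| <= n)%N.

Definition is_base (Y J : {set T}) : Prop :=
  [/\ J \subset Y, indep J &
      forall J' : {set T}, J \subset J' -> J' \subset Y -> indep J' -> J' = J].

Definition is_min_base (Y J : {set T}) : Prop :=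
  is_base Y J /\ forall J', is_base Y J' -> (#|J| <= #|J'|)%N.

Definition is_max_base (Y J : {set T}) : Prop :=
  is_base Y J /\ forall J', is_base Y J' -> (#|J'| <= #|J|)%N.

Definition in_ball (b a : T) : bool := (tau b - tw < tau a) && (tau a < tau b + tw).

(* One DeletionStep from (Jmin, Jmax) to (Jmin', Jmax'); all admissible
   tie-breaking choices are allowed: b is any element of Jmin of minimum
   timestamp, and Rm is the set of the first min(2, |L|) elements of
   L = {a in Jmax | tau a in ball(b)} for some listing in increasing
   order of timestamp. *)
Definition deletion_step (p q : {set T} * {set T}) : Prop :=
  let: (Jmin, Jmax) := p in
  let: (Jmin', Jmax') := q in
  Jmin != set0 /\
  exists b, [/\ b \in Jmin, (forall c, c \in Jmin -> tau b <= tau c),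
     Jmin' = Jmin :\ b &
     let L := [set a in Jmax | in_ball b a] in
     exists Rm : {set T},
       [/\ Rm \subset L, #|Rm| = minn 2 #|L|,
           (forall x y, x \in Rm -> y \in L :\: Rm -> tau x <= tau y) &
           Jmax' = Jmax :\: Rm]].

Fixpoint steps (k : nat) (p q : {set T} * {set T}) : Prop :=
  match k with
  | O => q = p
  | S k' => exists r, deletion_step p r /\ steps k' r q
  end.

Definition ball_invariant (p : {set T} * {set T}) : Prop :=
  forall a, a \in p.2 -> exists c, c \in p.1 /\ in_ball a c.

End Defs.

(* Main.v *)
Require Import Defs.
From HB Require Import structures.
From mathcomp Require Import all_boot all_order all_algebra.
From mathcomp Require Import reals.
From mathcomp Require Import lra zify.
From Stdlib Require Import Classical.
Import Order.TTheory GRing.Theory Num.Theory.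
Set Implicit Arguments. Unset Strict Implicit. Unset Printing Implicit Defensive.
Local Open Scope ring_scope.

Lemma arith_fin (x1 a b x3 s1 sw s3 n bp ap w1 : nat) :
  (x1 <= s1 -> a <= n -> b <= n -> x3 <= bp -> bp <= 2 * ap -> w1 <= sw ->
  n <= w1 -> ap <= s3 -> x1 + ((a + b) + x3) <= 2 * (s1 + (sw + s3)))%N.
Proof. lia. Qed.

Section Aux.
Variables (R : realType) (T : finType) (tau : T -> R) (tw : R) (n : nat).
Hypothesis htw : 0 < tw.

Definition Bset (B : {set T}) (p q : R) :=
  [set x in B | (p <= tau x) && (tau x <= q)].
Definition Aset (A : {set T}) (p q : R) :=
  [set c in A | (p - tw < tau c) && (tau c < q + tw)].
Definition Hall (A B : {set T}) :=
  forall p q : R, (#|Bset B p q| <= 2 * #|Aset A p q|)%N.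

Lemma card_split (S : {set T}) (P : pred T) :
  #|S| = (#|[set x in S | P x]| + #|[set x in S | ~~ P x]|)%N.
Proof.
rewrite -(cardsID [set x | P x] S); congr (_ + _)%N; apply: eq_card => x;
  rewrite !inE //; by rewrite andbC.
Qed.

Lemma ex_min (S : {set T}) (f : T -> R) :
  S != set0 -> exists2 z, z \in S & forall y, y \in S -> f z <= f y.
Proof.
case/set0Pn => z0 z0S.
case: (@arg_minP _ R T z0 (fun x => x \in S) f z0S) => z zS zmin.
by exists z.
Qed.

Lemma Hall_ball A B : Hall A B -> ball_invariant tau tw (A, B).
Proof.
move=> H a aB /=. have := H (tau a) (tau a).
case: (set_0Vmem (Aset A (tau a) (tau a))) => [->|[c]].
- rewrite cards0 muln0 leqn0 cards_eq0 => /eqP/setP/(_ a).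
  by rewrite !inE aB !lexx.
- rewrite !inE => /andP[cA /andP[h1 h2]] _. exists c; split => //.
  by rewrite /in_ball h1 h2.
Qed.

Lemma Hall_witness A B b : Hall A B -> (forall c, c \in A -> tau b <= tau c) ->
  forall x, x \in B -> tau b - tw < tau x.
Proof.
move=> H bmin x xB. have [c [cA /andP[h1 h2]]] := Hall_ball H xB.
have := bmin c cA. move=> ?; lra.
Qed.


Lemma step_Hall A B A' B' : Hall A B -> deletion_step tau tw (A, B) (A', B') ->
  Hall A' B'.
Proof.
move=> H [_ [b [bA bmin -> hL]]] p q.
move: hL => /= [Rm [RmL cRm Rord ->]].
set L := [set a in B | in_ball tau tw b a] in RmL cRm Rord.
have Wit := Hall_witness H bmin.
case: (boolP ((p - tw < tau b) && (tau b < q + tw))) => hb; last first.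
  have -> : Aset (A :\ b) p q = Aset A p q.
    apply/setP => c; rewrite !inE.
    case: (eqVneq c b) => [->|_] /=; last by [].
    by rewrite (negbTE hb) andbF.
  apply: leq_trans (H p q). apply: subset_leq_card.
  apply/subsetP => x; rewrite !inE => /andP[/andP[_ xB] ->]; by rewrite xB.
move/andP: hb => [hb1 hb2].
have cardA : #|Aset A p q| = (#|Aset (A :\ b) p q|).+1.
  have -> : Aset A p q = b |: Aset (A :\ b) p q.
    apply/setP=> c; rewrite !inE.
    case: (eqVneq c b) => [->|nb] /=; first by rewrite bA hb1 hb2.
    by [].
  by rewrite cardsU1 !inE eqxx /= add1n.
case: (leqP 2 #|L|) => hL.
  have cR : #|Rm| = 2%N by rewrite cRm; apply/minn_idPl.
  case: (boolP [exists r in Rm, q < tau r]) => [/existsP[r /andP[rR qr]]|nex].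
    have -> : Bset (B :\: Rm) p q = set0.
      apply/setP => x; rewrite !inE. apply/negbTE; apply/negP.
      move=> /andP[/andP[xR xB] /andP[px xq]].
      have rL := subsetP RmL r rR. move: (rL); rewrite inE => /andP[rB /andP[_ rlt]].
      have xL : x \in L :\: Rm.
        rewrite !inE xR xB /in_ball (Wit x xB) /=.
        lra.
      have := Rord r x rR xL. lra.
    by rewrite cards0.
  have allq : forall r, r \in Rm -> tau r <= q.
    move=> r rR. move: nex; rewrite negb_exists => /forallP /(_ r).
    by rewrite rR /= -leNgt.
  have [p0 [hp0 hp0']] : exists p0, p0 <= p /\ p0 <= tau b - tw.
    case: (lerP p (tau b - tw)) => h; [exists p | exists (tau b - tw)]; split; lra.
  have disj : Bset (B :\: Rm) p q :&: Rm = set0.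
    apply/setP => x; rewrite !inE.
    by case: (x \in Rm); rewrite ?andbF ?andbT.
  have h1 : (#|Bset (B :\: Rm) p q| + 2 <= #|Bset B p0 q|)%N.
    rewrite -cR. have := cardsUI (Bset (B :\: Rm) p q) Rm.
    rewrite disj cards0 addn0 => <-.
    apply: subset_leq_card. apply/subsetP => x; rewrite !inE.
    case/orP => [/andP[/andP[_ xB] /andP[px xq]] | xR].
      rewrite xB xq /= andbT. lra.
    have := subsetP RmL x xR; rewrite inE => /andP[xB /andP[i1 i2]].
    rewrite xB (allq x xR) /= andbT. lra.
  have h2 : (#|Aset A p0 q| <= #|Aset A p q|)%N.
    apply: subset_leq_card; apply/subsetP => c; rewrite !inE.
    move=> /andP[cA /andP[_ c2]]; rewrite cA c2 andbT /=.
    have := bmin c cA. move=> ?; lra.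
  have h3 := H p0 q.
  rewrite cardA in h2. lia.
have RmE : Rm = L.
  apply/eqP; rewrite eqEcard RmL cRm /=.
  by rewrite (minn_idPr (ltnW hL)).
have [p1 [hp1a hp1b hp1c]] :
    exists p1, [/\ p <= p1, tau b + tw <= p1 & (p1 = p \/ p1 = tau b + tw)].
  case: (lerP p (tau b + tw)) => h; [exists (tau b + tw) | exists p];
    split => //; (try lra); by [left | right].
have h1 : (#|Bset (B :\: Rm) p q| <= #|Bset B p1 q|)%N.
  apply: subset_leq_card; apply/subsetP => x; rewrite !inE.
  move=> /andP[/andP[xR xB] /andP[px xq]]; rewrite xB xq andbT /=.
  have xL : x \notin L by rewrite -RmE.
  move: xL; rewrite inE xB /= /in_ball (Wit x xB) /= -leNgt => xge.
  by case: hp1c => ->.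
have h2 : (#|Aset A p1 q| <= #|Aset (A :\ b) p q|)%N.
  apply: subset_leq_card; apply/subsetP => c; rewrite !inE.
  move=> /andP[cA /andP[c1 c2]]; rewrite cA c2 andbT /=.
  apply/andP; split; last lra.
  apply/eqP => cb. move: c1; rewrite cb. lra.
have h3 := H p1 q.
lia.
Qed.

Lemma block (Y J1 : {set T}) z : is_base tau tw n Y J1 -> z \in Y -> z \notin J1 ->
  exists t, [/\ t <= tau z, tau z < t + tw &
    leq n #|[set e in J1 | (t <= tau e) && (tau e < t + tw)]| ].
Proof.
move=> [J1Y J1i J1max] zY zJ.
have : ~ indep tau tw n (z |: J1).
  move=> hi.
  have e : z |: J1 = J1.
    by apply: J1max => //; [exact: subsetUr | rewrite subUset sub1set zY J1Y].
  by move: zJ; rewrite -e setU11.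
move/not_all_ex_not => [t ht]. exists t.
have ht' : leq n.+1 #|[set e in z |: J1 | (t <= tau e) && (tau e < t + tw)]|.
  by rewrite ltnNge; apply/negP.
case: (boolP ((t <= tau z) && (tau z < t + tw))) => zt.
  move/andP: (zt) => [z1 z2]. split => //.
  have ee : [set e in z |: J1 | (t <= tau e) && (tau e < t + tw)] =
      z |: [set e in J1 | (t <= tau e) && (tau e < t + tw)].
    apply/setP => e; rewrite !inE.
    by case: (eqVneq e z) => [->|] //=.
  rewrite ee cardsU1 in ht'.
  have := leq_b1 (z \notin [set e in J1 | (t <= tau e) && (tau e < t + tw)]).
  lia.
exfalso.
have ee : [set e in z |: J1 | (t <= tau e) && (tau e < t + tw)] =
    [set e in J1 | (t <= tau e) && (tau e < t + tw)].
  apply/setP => e; rewrite !inE.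
  case: (eqVneq e z) => [->|] //=. by rewrite (negbTE zt) andbF.
rewrite ee in ht'. have := J1i t. lia.
Qed.

Lemma hall_init (Y J1 J2 : {set T}) : is_base tau tw n Y J1 -> J2 \subset Y ->
  indep tau tw n J2 -> Hall J1 J2.
Proof.
move=> hb J2Y J2i.
have htw0 : 0 < tw := htw.
suff: forall k p q, (#|Bset J2 p q| <= k)%N ->
    (#|Bset J2 p q| <= 2 * #|Aset J1 p q|)%N.
  by move=> h p q; exact: h _ _ _ (leqnn _).
elim=> [|k IH] p q hk.
  by move: hk; rewrite leqn0 => /eqP ->.
case: (boolP (Bset J2 p q \subset J1)) => sub.
  apply: (leq_trans (n := #|Aset J1 p q|)); last first.
    by rewrite mulSn leq_addr.
  apply: subset_leq_card; apply/subsetP => x xX.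
  have xJ := subsetP sub x xX.
  move: xX; rewrite !inE xJ => /andP[_ /andP[h1 h2]] /=.
  apply/andP; split; lra.
have Dn0 : Bset J2 p q :\: J1 != set0.
  apply/set0Pn. move/subsetPn: sub => [z zX zJ]. exists z.
  by rewrite inE zJ zX.
have [z zD zmin] := ex_min tau Dn0.
move: (zD); rewrite !inE => /andP[zJ /andP[zJ2 /andP[pz zq]]].
have zY := subsetP J2Y z zJ2.
have [t [t1 t2 tn]] := block hb zY zJ.
set p' := t + 2 * tw.
have hlt : (#|Bset J2 p' q| < #|Bset J2 p q|)%N.
  apply: proper_card. apply/properP; split.
    apply/subsetP => x; rewrite !inE => /andP[xJ /andP[h1 h2]].
    rewrite xJ h2 andbT /=. rewrite /p' in h1. lra.
  exists z; first by rewrite !inE zJ2 pz zq.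
  rewrite !inE zJ2 /= negb_and -ltNge. apply/orP; left. rewrite /p'. lra.
have ih := IH p' q (ltnSE (leq_trans hlt hk)).
set X := Bset J2 p q.
rewrite (card_split X (fun x => tau x < t)).
rewrite (card_split [set x in X | ~~ (tau x < t)] (fun x => tau x < p')).
rewrite (card_split [set x in [set x in X | ~~ (tau x < t)] | tau x < p']
   (fun x => tau x < t + tw)).
set S := Aset J1 p q.
rewrite (card_split S (fun x => tau x < t)).
rewrite (card_split [set x in S | ~~ (tau x < t)] (fun x => tau x < t + tw)).
set W1 := [set e in J1 | (t <= tau e) && (tau e < t + tw)] in tn.
have b1 : leq #|[set x in X | tau x < t]| #|[set x in S | tau x < t]|.
  apply: subset_leq_card; apply/subsetP => x; rewrite !inE.
  move=> /andP[/andP[xJ2 /andP[px xq]] xt].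
  have xJ1 : x \in J1.
    apply/negPn/negP => xn.
    have : x \in Bset J2 p q :\: J1 by rewrite !inE xn xJ2 px xq.
    move/zmin. lra.
  rewrite xJ1 xt /= andbT. apply/andP; split; lra.
have b2 : leq #|[set x in [set x in [set x in X | ~~ (tau x < t)] | tau x < p']
            | tau x < t + tw]| n.
  apply: leq_trans (J2i t). apply: subset_leq_card; apply/subsetP => x.
  rewrite !inE -leNgt. by move=> /andP[/andP[/andP[/andP[-> _] ->] _] ->].
have b3 : leq #|[set x in [set x in [set x in X | ~~ (tau x < t)] | tau x < p']
            | ~~ (tau x < t + tw)]| n.
  apply: leq_trans (J2i (t + tw)). apply: subset_leq_card; apply/subsetP => x.
  rewrite !inE -!leNgt. move=> /andP[/andP[/andP[/andP[-> _] _] h] ->] /=.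
  rewrite /p' in h. lra.
have b4 : leq #|[set x in [set x in X | ~~ (tau x < t)] | ~~ (tau x < p')]|
           #|Bset J2 p' q|.
  apply: subset_leq_card; apply/subsetP => x.
  rewrite !inE -!leNgt. move=> /andP[/andP[/andP[-> /andP[_ ->]] _] ->].
  done.
have b5 : leq #|W1| #|[set x in [set x in S | ~~ (tau x < t)] | tau x < t + tw]|.
  apply: subset_leq_card; apply/subsetP => x.
  rewrite !inE -!leNgt. move=> /andP[-> /andP[h1 h2]].
  rewrite h1 h2 /= !andbT. apply/andP; split; lra.
have b6 : leq #|Aset J1 p' q|
     #|[set x in [set x in S | ~~ (tau x < t)] | ~~ (tau x < t + tw)]|.
  apply: subset_leq_card; apply/subsetP => x.
  rewrite !inE -!leNgt. move=> /andP[-> /andP[h1 h2]].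
  rewrite /p' in h1. rewrite h2 /= andbT.
  apply/andP; split; [apply/andP; split|]; lra.
exact: arith_fin b1 b2 b3 b4 ih b5 tn b6.
Qed.

End Aux.


Theorem lemma3 (R : realType) (T : finType) (tau : T -> R) (tw : R) (n : nat)
  (htw : 0 < tw) (hn : (1 <= n)%N) (Y Jmin Jmax : {set T})
  (hmin : is_min_base tau tw n Y Jmin) (hmax : is_max_base tau tw n Y Jmax) :
  ball_invariant tau tw (Jmin, Jmax) /\
  (forall (k : nat) (q : {set T} * {set T}),
     steps tau tw k (Jmin, Jmax) q -> ball_invariant tau tw q).
Proof.
have H0 : Hall tau tw Jmin Jmax.
  case: hmin => hb _; case: hmax => [[JY Ji _] _].
  by move=> p q; apply: (hall_init htw hb JY Ji).
split; first exact: Hall_ball H0.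
suff: forall k p q, Hall tau tw p.1 p.2 -> steps tau tw k p q ->
    Hall tau tw q.1 q.2.
  move=> h k [A B] hs. apply: Hall_ball. exact: (h k (Jmin, Jmax) (A, B) H0 hs).
elim=> [|k IH] [A B] q0 /= hH.
  by move=> ->.
move=> [[A' B'] [hd hs]].
apply: (IH (A', B') q0) => //=.
by move=> p q; apply: (step_Hall htw hH hd).
Qed.
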